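(* Let $(X,\Sigma)$ be a measurable space, $p$ a transition function on it with associated operator $A$ on $ba(X,\Sigma)$, and let $K=\{\mu_1,\dots,\mu_m\}$ be a finitely additive cycle of measures of $A$. If at least one cyclic measure $\mu_i$ is purely finitely additive, then all cyclic measures $\mu_1,\dots,\mu_m$ and the mean measure $\frac1m\sum_{k=1}^m\mu_k$ are purely finitely additive.
   Context: $X$ is an arbitrary infinite set and $\Sigma$ a $\sigma$-algebra of subsets of $X$ containing all one-point sets. $ba(X,\Sigma)$ denotes the space of bounded finitely additive real-valued measures on $\Sigma$. A nonnegative finitely additive measure $\mu$ is purely finitely additive if every countably additive measure $\lambda$ with $0\le\lambda\le\mu$ is identically zero. A transition function is a map $p(x,E)$ with $0\le p(x,E)\le 1$, $p(x,X)=1$, $p(\cdot,E)$ bounded $\Sigma$-measurable for every $E\in\Sigma$, and $p(x,\cdot)$ countably additive for every $x\in X$. The Markov operator is $A\mu(E)=\int_X p(x,E)\,\mu(dx)$. A cycle of measures of $A$ is a finite numbered set $\{\mu_1,\dots,\mu_m\}$ of pairwise different positive finitely additive measures with $A\mu_i=\mu_{i+1}$ ($1\le i\le m-1$) and $A\mu_m=\mu_1$; its mean measure is $\frac1m\sum_{k=1}^m\mu_k$. *)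

(* Defs.v *)
From HB Require Import structures.
From mathcomp Require Import all_boot all_order all_algebra.
From mathcomp Require Import all_classical all_reals all_analysis.
Set Implicit Arguments. Unset Strict Implicit. Unset Printing Implicit Defensive.
Import Order.TTheory GRing.Theory Num.Theory.
Import numFieldNormedType.Exports.
Local Open Scope classical_set_scope.
Local Open Scope ring_scope.

Section Defs.
Context (d : measure_display) (X : measurableType d) (R : realType).

(* A real-valued set function, only its values on measurable sets matter. *)
Definition nonneg_on_sigma (mu : set X -> R) : Prop :=
  forall E, measurable E -> 0 <= mu E.

(* finitely additive (real-valued, hence bounded when nonnegative) *)
Definition fin_additive (mu : set X -> R) : Prop :=
  mu set0 = 0 /\
  forall A B, measurable A -> measurable B -> A `&` B = set0 ->
    mu (A `|` B) = mu A + mu B.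

Definition count_additive (mu : set X -> R) : Prop :=
  forall F : nat -> set X, (forall n, measurable (F n)) -> trivIset setT F ->
    (fun n => \sum_(k < n) mu (F k)) @ \oo --> mu (\bigcup_n F n).

Definition pos_fa_measure (mu : set X -> R) : Prop :=
  nonneg_on_sigma mu /\ fin_additive mu.

Definition purely_fin_additive (mu : set X -> R) : Prop :=
  pos_fa_measure mu /\
  forall lam : set X -> R, count_additive lam ->
    (forall E, measurable E -> 0 <= lam E /\ lam E <= mu E) ->
    forall E, measurable E -> lam E = 0.

Definition transition_function (p : X -> set X -> R) : Prop :=
  (forall x E, measurable E -> 0 <= p x E <= 1) /\
  (forall x, p x setT = 1) /\
  (forall E, measurable E -> measurable_fun setT (fun x => p x E)) /\
  (forall x, count_additive (p x)).

Definition lower_sums (mu : set X -> R) (f : X -> R) : set R :=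
  [set r | exists s : seq (set X * R),
     (forall i, (i < size s)%N -> measurable (nth (set0, 0) s i).1 /\
        forall x, (nth (set0, 0) s i).1 x -> (nth (set0, 0) s i).2 <= f x) /\
     (forall i j, (i < size s)%N -> (j < size s)%N -> i != j ->
        (nth (set0, 0) s i).1 `&` (nth (set0, 0) s j).1 = set0) /\
     (forall x, exists2 i, (i < size s)%N & (nth (set0, 0) s i).1 x) /\
     r = \sum_(q <- s) q.2 * mu q.1].

(* integral of a bounded measurable function w.r.t. a positive finitely
   additive measure (Dunford--Schwartz integral, as supremum of lower sums) *)
Definition fa_integral (mu : set X -> R) (f : X -> R) : R :=
  sup (lower_sums mu f).

Definition markov_op (p : X -> set X -> R) (mu : set X -> R) : set X -> R :=
  fun E => fa_integral mu (fun x => p x E).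

Definition measure_cycle (p : X -> set X -> R) (m : nat) (mu : nat -> set X -> R)
  : Prop :=
  (0 < m)%N /\
  (forall i, (i < m)%N -> pos_fa_measure (mu i)) /\
  (forall i j, (i < j)%N -> (j < m)%N -> exists2 E, measurable E & mu i E <> mu j E) /\
  (forall i, (i < m)%N -> forall E, measurable E ->
      markov_op p (mu i) E = mu ((i.+1) %% m)%N E).

Definition mean_measure (m : nat) (mu : nat -> set X -> R) : set X -> R :=
  fun E => (m%:R)^-1 * \sum_(k < m) mu k E.

End Defs.

(* Main.v *)
Require Import Defs.
From HB Require Import structures.
From mathcomp Require Import all_boot all_order all_algebra.
From mathcomp Require Import all_classical all_reals all_analysis.
From mathcomp Require Import measurable_realfun.
Import numFieldNormedType.Exports.
From mathcomp Require Import ring lra.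
Import Order.TTheory GRing.Theory Num.Theory.
Local Open Scope classical_set_scope.
Local Open Scope ring_scope.

Section Part1.
Set Implicit Arguments. Unset Strict Implicit.
Context (d : measure_display) (X : measurableType d) (R : realType).

Local Notation nt s i := (nth (@set0 X, (0:R)) s i).

Definition Ucells (s : seq (set X * R)) : set X :=
  [set x | exists2 i, (i < size s)%N & (nt s i).1 x].

Lemma Ucells_cons q s : Ucells (q :: s) = q.1 `|` Ucells s.
Proof.
apply/seteqP; split => x.
  by case=> -[|i] /= hi hx; [left|right; exists i].
case=> [hx|[i hi hx]]; first by exists 0%N.
by exists i.+1.
Qed.

Lemma fa_cells {mu : set X -> R} (Hfa : fin_additive mu) (s : seq (set X * R)) :
  (forall i, (i < size s)%N -> measurable (nt s i).1) ->
  (forall i j, (i < size s)%N -> (j < size s)%N -> i != j ->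
        (nt s i).1 `&` (nt s j).1 = set0) ->
  measurable (Ucells s) /\ \sum_(q <- s) mu q.1 = mu (Ucells s).
Proof.
case: Hfa => H0 Hadd.
elim: s => [|q s IH] hm hd.
  have -> : Ucells [::] = set0 by apply/seteqP; split => x // [i].
  by rewrite big_nil H0.
have [||mU sU] := IH.
- by move=> i hi; exact: (hm i.+1).
- by move=> i j hi hj hij; exact: (hd i.+1 j.+1).
rewrite Ucells_cons big_cons sU.
have mq : measurable q.1 by exact: (hm 0%N).
split; first exact: measurableU.
rewrite Hadd //; apply/seteqP; split => // x [hx [i hi hix]].
have := hd 0%N i.+1 isT hi isT.
by move=> /seteqP[+ _] => /(_ x) /=; apply.
Qed.

Lemma lower_sum_cells (mu : set X -> R) f r :
  lower_sums mu f r -> exists s : seq (set X * R),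
  [/\ (forall i, (i < size s)%N -> measurable (nt s i).1 /\
        forall x, (nt s i).1 x -> (nt s i).2 <= f x),
     (forall i j, (i < size s)%N -> (j < size s)%N -> i != j ->
        (nt s i).1 `&` (nt s j).1 = set0),
     Ucells s = setT &
     r = \sum_(q <- s) q.2 * mu q.1].
Proof.
case=> s [h1 [h2 [h3 h4]]]; exists s; split => //.
by apply/seteqP; split => // x _; case: (h3 x) => i hi hx; exists i.
Qed.

Lemma sum_nth (F : set X * R -> R) (s : seq (set X * R)) :
  \sum_(q <- s) F q = \sum_(i < size s) F (nt s i).
Proof. by rewrite (big_nth (set0, 0)) big_mkord. Qed.

Lemma lower_sum_le (mu : set X -> R) f r :
  pos_fa_measure mu -> (forall x, f x <= 1) ->
  lower_sums mu f r -> r <= mu setT.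
Proof.
move=> [mu0 mufa] f1 /lower_sum_cells [s [h1 h2 h3 ->]].
rewrite -h3; have [_ <-] := fa_cells mufa (fun i hi => (h1 i hi).1) h2.
rewrite !sum_nth; apply: ler_sum => i _.
have [mi hi] := h1 i (ltn_ord i).
have [[x hx]|e] := pselect (exists x, (nt s i).1 x).
  rewrite -[leRHS]mul1r ler_wpM2r ?mu0 //.
  exact: le_trans (hi x hx) (f1 x).
have -> : (nt s i).1 = set0.
  by apply/seteqP; split => // x hx; apply: e; exists x.
by rewrite mufa.1 mulr0.
Qed.

Lemma lower_sums_ne (mu : set X -> R) f :
  (forall x, 0 <= f x) -> lower_sums mu f (0 * mu setT).
Proof.
move=> f0; exists [:: (setT, 0)]; split.
  by case=> // _; split => [|x _ /=]; [exact: measurableT|exact: f0].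
split; first by move=> [|i] [|j].
split; first by move=> x; exists 0%N.
by rewrite big_cons big_nil addr0.
Qed.

Lemma lower_sums_has_sup (mu : set X -> R) f :
  pos_fa_measure mu -> (forall x, 0 <= f x <= 1) -> has_sup (lower_sums mu f).
Proof.
move=> hmu hf; split.
  by exists (0 * mu setT); apply: lower_sums_ne => x; case/andP: (hf x).
exists (mu setT) => r hr; apply: lower_sum_le hr => // x; by case/andP: (hf x).
Qed.

Lemma fa_integral_ge (mu : set X -> R) f r :
  pos_fa_measure mu -> (forall x, 0 <= f x <= 1) -> lower_sums mu f r ->
  r <= fa_integral mu f.
Proof.
move=> hmu hf hr; have := sup_upper_bound (lower_sums_has_sup hmu hf).
by move/ubP; apply.
Qed.

Lemma fa_integral_mono (lam mu : set X -> R) f :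
  pos_fa_measure mu -> (forall x, 0 <= f x <= 1) ->
  (forall E, measurable E -> 0 <= lam E /\ lam E <= mu E) ->
  fa_integral lam f <= fa_integral mu f.
Proof.
move=> hmu hf hlm; apply: ge_sup.
  by exists (0 * lam setT); apply: lower_sums_ne => x; case/andP: (hf x).
move=> r /lower_sum_cells [s [h1 h2 h3 ->]].
apply: (@le_trans _ _ (\sum_(q <- [seq (q.1, Num.max q.2 0) | q <- s]) q.2 * mu q.1)).
  rewrite big_map !sum_nth; apply: ler_sum => i _ /=.
  have [mi _] := h1 i (ltn_ord i).
  have [l0 lm] := hlm _ mi.
  apply: (@le_trans _ _ (Num.max (nt s i).2 0 * lam (nt s i).1)).
    by rewrite ler_wpM2r // le_max lexx.
  by rewrite ler_wpM2l // le_max lexx orbT.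
apply: fa_integral_ge => //.
exists [seq (q.1, Num.max q.2 0) | q <- s]; split; last split; last split => //.
- rewrite size_map => i hi; rewrite (nth_map (set0, 0)) //=.
  have [mi hi2] := h1 i hi; split => // x hx.
  by rewrite ge_max hi2 //=; case/andP: (hf x).
- rewrite size_map => i j hi hj hij; rewrite !(nth_map (set0, 0)) //=.
  exact: h2.
- move=> x; have : Ucells s x by rewrite h3.
  by case=> i hi hx; exists i; rewrite ?size_map // (nth_map (set0, 0)).
Qed.


Lemma ca_fa (lam : set X -> R) : lam set0 = 0 -> count_additive lam ->
  fin_additive lam.
Proof.
move=> l0 lca; split => // A B mA mB AB.
have mF : forall n, measurable (bigcup2 A B n).
  by move=> [|[|n]] //=.
have tF : trivIset setT (bigcup2 A B) by rewrite -trivIset_bigcup2.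
have := lca _ mF tF; rewrite bigcup2E => h.
have h2 : (fun n => \sum_(k < n) lam (bigcup2 A B k)) @ \oo --> lam A + lam B.
  apply: cvg_near_cst; near=> n.
  have n2 : (2 <= n)%N by near: n; exists 2%N.
  rewrite -(subnKC n2) big_split_ord /= big_ord_recl big_ord_recl big_ord0.
  rewrite big1 /=; first by rewrite addr0 addr0.
  by move=> i _; rewrite /bigcup2 /=.
exact: (cvg_unique _ h h2).
Unshelve. all: by end_near.
Qed.

End Part1.

Section MeasCA.
Set Implicit Arguments. Unset Strict Implicit.
Context (d : measure_display) (X : measurableType d) (R : realType).
Variable lam : set X -> R.
Hypothesis l0 : forall E, measurable E -> 0 <= lam E.
Hypothesis lset0 : lam set0 = 0.
Hypothesis lca : count_additive lam.

Definition mlam (E : set X) : \bar R := (Num.max (lam E) 0)%:E.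

Let mlam0 : mlam set0 = 0%E.
Proof. by rewrite /mlam lset0 maxxx. Qed.

Let mlam_ge0 E : (0 <= mlam E)%E.
Proof. by rewrite /mlam lee_fin le_max lexx orbT. Qed.

Lemma mlamE E : measurable E -> mlam E = (lam E)%:E.
Proof. by move=> mE; rewrite /mlam max_l // l0. Qed.

Let mlam_sigma : semi_sigma_additive mlam.
Proof.
move=> F mF tF mUF; rewrite mlamE //.
have -> : (fun n => \sum_(0 <= i < n) mlam (F i)) =
    (fun n => (\sum_(k < n) lam (F k))%:E).
  apply/funext => n; rewrite big_mkord -sumEFin; apply: eq_bigr => k _.
  exact: mlamE.
apply: cvg_EFin; first exact: nearW.
exact: lca.
Qed.

HB.instance Definition _ := isMeasure.Build _ _ _ mlam mlam0 mlam_ge0 mlam_sigma.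


Let lam_pos : pos_fa_measure lam.
Proof. by split => //; exact: ca_fa. Qed.

Local Open Scope ereal_scope.
Import HBNNSimple.

Lemma int_le_fa (f : X -> R) : (forall x, (0 <= f x <= 1)%R) ->
  \int[mlam]_x (f x)%:E <= (fa_integral lam f)%:E.
Proof.
move=> hf.
rewrite ge0_integralTE; last by move=> x; rewrite lee_fin; case/andP: (hf x).
apply: ge_ereal_sup => _ [h /= hh <-].
rewrite sintegralE fsbig_finite /=; last exact: fimfunP.
set l := finmap.enum_fset _.
have ul : uniq l by exact: finmap.fset_uniq.
rewrite (eq_bigr (fun r => (r * lam (h @^-1` [set r]))%:E)); last first.
  move=> r _; rewrite mlamE //; exact: measurable_funPTI (measurable_set1 r).
rewrite sumEFin lee_fin; apply: fa_integral_ge => //.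
exists [seq (h @^-1` [set r], r) | r <- l].
split; last split; last split.
- rewrite size_map => i hi; rewrite (nth_map 0%R) //=; split.
    exact: measurable_funPTI (measurable_set1 _).
  move=> x /= <-; have := hh x; by rewrite lee_fin.
- rewrite size_map => i j hi hj hij; rewrite !(nth_map 0%R) //=.
  apply/seteqP; split => // x [/= e1 e2].
  by move: hij; rewrite -(nth_uniq 0%R hi hj ul) -e1 -e2 eqxx.
- move=> x; have hx : h x \in l.
    by rewrite /l in_fset_set ?inE; [exists x|exact: fimfunP].
  exists (index (h x) l); rewrite ?size_map ?index_mem //.
  by rewrite (nth_map 0%R) ?index_mem //= nth_index.
- by rewrite big_map.
Qed.


Local Notation nt s i := (nth (@set0 X, (0:R)%R) s i).

Lemma lower_le_int (f : X -> R) r : measurable_fun setT f ->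
  (forall x, (0 <= f x <= 1)%R) -> lower_sums lam f r ->
  r%:E <= \int[mlam]_x (f x)%:E.
Proof.
move=> mf hf /lower_sum_cells [s [h1 h2 h3 ->]].
pose c (i : 'I_(size s)) := Num.max (nt s i).2 0%R.
pose A (i : 'I_(size s)) := (nt s i).1.
have mA i : measurable (A i) by exact: (h1 i (ltn_ord i)).1.
have c0 i : (0 <= c i)%R by rewrite /c le_max lexx orbT.
apply: (@le_trans _ _ (\sum_(i < size s) (c i * lam (A i))%:E)%E).
  rewrite sumEFin lee_fin sum_nth; apply: ler_sum => i _.
  rewrite /c /A; apply: ler_wpM2r; first exact/l0/(h1 i (ltn_ord i)).1.
  by rewrite le_max lexx.
have -> : \sum_(i < size s) (c i * lam (A i))%:E =
    \sum_(i < size s) \int[mlam]_x (c i * \1_(A i) x)%:E.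
  apply: eq_bigr => i _.
  rewrite (@integralZl_indic _ _ _ _ _ measurableT (fun _ => A i)) //; last first.
    by move=> /lt_le_trans/(_ (c0 i)); rewrite ltxx.
  by rewrite integral_indic // setIT EFinM -(mlamE (mA i)).
rewrite -ge0_integral_sum //; last first.
- by move=> i x _; rewrite lee_fin mulr_ge0.
- move=> i; apply/measurable_realfun.measurable_EFinP.
  apply: measurable_realfun.measurable_funM; first exact: measurable_cst.
  exact: measurable_realfun.measurable_indic.
apply: ge0_le_integral => //.
- by move=> x _; apply: sume_ge0 => i _; rewrite lee_fin mulr_ge0.
- apply: emeasurable_sum => i; apply/measurable_realfun.measurable_EFinP.
  apply: measurable_realfun.measurable_funM; first exact: measurable_cst.
  exact: measurable_realfun.measurable_indic.
- exact/measurable_realfun.measurable_EFinP.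
move=> x _; rewrite sumEFin lee_fin.
have : Ucells s x by rewrite h3.
case=> i0 hi0 hx.
rewrite (bigD1 (Ordinal hi0)) //= big1 ?addr0.
  rewrite /A /= indicE mem_set // mulr1 /c ge_max (h1 _ hi0).2 //=.
  by case/andP: (hf x).
move=> j hj; rewrite /A indicE memNset ?mulr0 //.
move=> hjx; have := h2 j i0 (ltn_ord j) hi0.
by move=> /(_ hj) /seteqP[+ _] => /(_ x (conj hjx hx)).
Qed.


Lemma int_eq (f : X -> R) : measurable_fun setT f ->
  (forall x, (0 <= f x <= 1)%R) ->
  \int[mlam]_x (f x)%:E = (fa_integral lam f)%:E.
Proof.
move=> mf hf; apply/eqP; rewrite eq_le int_le_fa //=.
have I0 : 0 <= \int[mlam]_x (f x)%:E.
  by apply: integral_ge0 => x _; rewrite lee_fin; case/andP: (hf x).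
have Ile := int_le_fa hf.
have Ifin : \int[mlam]_x (f x)%:E \is a fin_num by rewrite ge0_fin_numE // (le_lt_trans Ile) ?ltry.
rewrite -(fineK Ifin) lee_fin; apply: ge_sup.
  by exists (0 * lam setT)%R; apply: lower_sums_ne => x; case/andP: (hf x).
move=> r hr; rewrite -lee_fin fineK //; exact: lower_le_int.
Qed.

Lemma markov_ca (p : X -> set X -> R) : transition_function p ->
  count_additive (markov_op p lam).
Proof.
move=> [p01 [p1 [pm pca]]] F mF tF.
have mU : measurable (\bigcup_n F n) by exact: bigcupT_measurable.
have hf E : measurable E -> forall x, (0 <= p x E <= 1)%R by move=> mE x; exact: p01.
have mfE E : measurable E -> measurable_fun setT (fun x => (p x E)%:E).
  by move=> mE; apply/measurable_realfun.measurable_EFinP; exact: pm.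
rewrite /markov_op.
suff hE : (fun n => (\sum_(k < n) fa_integral lam (fun x => p x (F k)))%:E) @ \oo -->
   (fa_integral lam (fun x => p x (\bigcup_n F n)))%:E.
  exact: (fine_cvg hE).
rewrite -int_eq; [|exact: (pm _ mU)|exact: (hf _ mU)].
have := @integral_nneseries _ _ _ mlam setT measurableT (fun k x => (p x (F k))%:E)
  (fun k => mfE _ (mF k)) (fun k x _ => proj1 (andP (hf _ (mF k) x))).
have -> : (fun x => \sum_(n <oo) (p x (F n))%:E) = (fun x => (p x (\bigcup_n F n))%:E).
  apply/funext => x; apply: cvg_lim => //.
  have -> : (fun n => \sum_(0 <= k < n) (p x (F k))%:E) =
            (fun n => (\sum_(k < n) p x (F k))%:E).
    by apply/funext => n; rewrite big_mkord sumEFin.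
  apply: cvg_EFin; first exact: nearW.
  exact: pca.
move=> ->.
have -> : (fun n => (\sum_(k < n) fa_integral lam (fun x => p x (F k)))%:E) =
     (fun n => \sum_(0 <= k < n) \int[mlam]_x (p x (F k))%:E).
  apply/funext => n; rewrite big_mkord -sumEFin.
  apply: eq_bigr => k _.
  by rewrite int_eq //; [exact: pm|exact: hf].
apply: is_cvg_nneseries => k _ _.
by apply: integral_ge0 => x _; rewrite lee_fin; case/andP: (hf _ (mF k) x).
Qed.

End MeasCA.

Section Main.
Set Implicit Arguments. Unset Strict Implicit.
Context (d : measure_display) (X : measurableType d) (R : realType).
Variable p : X -> set X -> R.
Hypothesis Hp : transition_function p.

Lemma ca_pos (lam : set X -> R) : count_additive lam ->
  (forall E, measurable E -> 0 <= lam E) -> lam set0 = 0 -> pos_fa_measure lam.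
Proof. by move=> ca l0 ls0; split => //; exact: ca_fa. Qed.

Lemma markov_step (lam mu : set X -> R) : count_additive lam ->
  (forall E, measurable E -> 0 <= lam E /\ lam E <= mu E) ->
  pos_fa_measure mu ->
  [/\ count_additive (markov_op p lam),
      forall E, measurable E -> 0 <= markov_op p lam E /\
                 markov_op p lam E <= markov_op p mu E &
      lam setT <= markov_op p lam setT].
Proof.
move=> ca hlm hmu.
have l0 E : measurable E -> 0 <= lam E by move=> /hlm[].
have ls0 : lam set0 = 0.
  apply/eqP; rewrite eq_le l0 // andbT -hmu.2.1; exact: (hlm _ measurable0).2.
have lpos := ca_pos ca l0 ls0.
have [p01 [p1 [pm pca]]] := Hp.
split.
- exact: markov_ca.
- move=> E mE; split; last by apply: fa_integral_mono => // x; exact: p01.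
  rewrite -(mul0r (lam setT)); apply: fa_integral_ge => //.
    by move=> x; exact: p01.
  by apply: lower_sums_ne => x; case/andP: (p01 x E mE).
- rewrite /markov_op -[X in X <= _]mul1r; apply: fa_integral_ge => //.
    by move=> x; rewrite p1 ler01 lexx.
  exists [:: (setT, 1)]; split.
    by case=> // _; split => [|x _ /=]; [exact: measurableT|rewrite p1].
  split; first by move=> [|i] [|j].
  split; first by move=> x; exists 0%N.
  by rewrite big_cons big_nil addr0.
Qed.

Lemma cycle_pure (m : nat) (mu : nat -> set X -> R) :
  measure_cycle p m mu ->
  forall i j, (i < m)%N -> (j < m)%N -> purely_fin_additive (mu i) ->
  purely_fin_additive (mu j).
Proof.
move=> [m0 [mpos [_ mcyc]]] i j im jm [_ pi]; split; first exact: mpos.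
move=> lam ca hl.
pose lk k := iter k (markov_op p) lam.
have P k : [/\ count_additive (lk k),
   forall E, measurable E -> 0 <= lk k E /\ lk k E <= mu ((j + k) %% m)%N E &
   lam setT <= lk k setT].
  elim: k => [|k [cak hk lk1]].
    by rewrite addn0 modn_small //; split.
  have jkm : ((j + k) %% m < m)%N by rewrite ltn_pmod.
  have [ca' h' l'] := markov_step cak hk (mpos _ jkm).
  split => //; last exact: le_trans l'.
  move=> E mE; have [h1 h2] := h' E mE; split => //.
  by rewrite addnS; move: h2; rewrite mcyc // -addn1 modnDml addn1.
pose k := (i + m - j)%N.
have e : ((j + k) %% m)%N = i.
  by rewrite /k addnBA ?(leq_trans (ltnW jm)) ?leq_addl // addKn modnDr modn_small.
have [cak hk lk1] := P k; rewrite e in hk.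
have z := pi _ cak hk setT measurableT.
have l0 E : measurable E -> 0 <= lam E by move=> /hl[].
have ls0 : lam set0 = 0.
  apply/eqP; rewrite eq_le l0 // andbT -(mpos _ jm).2.1; exact: (hl _ measurable0).2.
have [_ fa] := ca_fa ls0 ca.
move=> E mE; apply/eqP; rewrite eq_le l0 // andbT.
have : lam setT <= 0 by rewrite -z.
rewrite -(setUv E) fa //; last 2 first.
- exact: measurableC.
- by rewrite setICr.
move=> h; have := l0 _ (measurableC mE).
by move=> h2; apply: le_trans h; rewrite lerDl.
Qed.

End Main.

Section Pure.
Set Implicit Arguments. Unset Strict Implicit.
Context (d : measure_display) (X : measurableType d) (R : realType).

Lemma fa_sumU (nu : set X -> R) (F : nat -> set X) : fin_additive nu ->
  (forall n, measurable (F n)) -> trivIset setT F ->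
  forall n, \sum_(k < n) nu (F k) = nu (\big[setU/set0]_(k < n) F k).
Proof.
move=> [n0 fa] mF tF; elim=> [|n IH]; first by rewrite !big_ord0 n0.
rewrite !big_ord_recr /= IH fa //; first exact: bigsetU_measurable.
rewrite -bigcup_mkord; apply/seteqP; split => // x [[k /= kn hk] hn].
have := (trivIsetP.1 tF) k n I I; rewrite neq_ltn kn => /(_ isT).
by move=> /seteqP[+ _] => /(_ x (conj hk hn)).
Qed.

Lemma dom_ca (nu lam : set X -> R) : fin_additive nu ->
  (forall E, measurable E -> 0 <= nu E <= lam E) ->
  lam set0 = 0 -> count_additive lam -> count_additive nu.
Proof.
move=> nfa hnl l0 lca F mF tF.
have lfa := ca_fa l0 lca.
set U := \bigcup_n F n.
have mU : measurable U by exact: bigcupT_measurable.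
pose Un n := \big[setU/set0]_(k < n) F k.
have mUn n : measurable (Un n) by exact: bigsetU_measurable.
have UnU n : Un n `<=` U.
  by rewrite /Un -bigcup_mkord => x [k _ hk]; exists k.
have dec (nu' : set X -> R) n : fin_additive nu' -> nu' U = nu' (Un n) + nu' (U `\` Un n).
  move=> [_ fa']; rewrite -fa' //; last 2 first.
  - exact: measurableD.
  - by apply/seteqP; split => // x [h1 [_ h2]].
  by rewrite setDUK.
have hl := lca F mF tF.
have hS n : \sum_(k < n) nu (F k) = nu U - nu (U `\` Un n).
  by rewrite (fa_sumU nfa mF tF) (dec nu n nfa) addrK.
have e : (fun n => \sum_(k < n) nu (F k)) = (fun n => nu U - nu (U `\` Un n)).
  by apply/funext => n; rewrite hS.
rewrite e -[X in _ --> X]subr0.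
apply: cvgB; first exact: cvg_cst.
have c0 : (fun _ : nat => (0:R)) @ \oo --> (0:R) by apply: cvg_cst.
apply: (@squeeze_cvgr _ _ _ R (fun _ => 0) (fun n => lam U - \sum_(k < n) lam (F k))).
- apply: nearW => n; have mD : measurable (U `\` Un n) by exact: measurableD.
  have /andP[h1 h2] := hnl _ mD; rewrite h1 /= (le_trans h2) //.
  by rewrite (fa_sumU lfa mF tF) (dec lam n lfa) [X in _ <= X]addrC addKr.
- exact: c0.
- rewrite -[X in _ --> X](subrr (lam U)); apply: cvgB; [exact: cvg_cst|exact: hl].
Qed.


Lemma fa_dec (mu : set X -> R) A B : fin_additive mu -> measurable A -> measurable B ->
  A `<=` B -> mu B = mu A + mu (B `\` A).
Proof.
move=> [_ fa] mA mB AB; rewrite -fa //; last 2 first.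
- exact: measurableD.
- by apply/seteqP; split => // x [h1 [_ h2]].
by rewrite setDUK.
Qed.

Lemma pos_mono (mu : set X -> R) A B : pos_fa_measure mu -> measurable A ->
  measurable B -> A `<=` B -> mu A <= mu B.
Proof.
move=> [m0 mfa] mA mB AB; rewrite (fa_dec mfa mA mB AB) lerDl.
exact/m0/measurableD.
Qed.

Section Nu.
Variables (mu lam : set X -> R).
Hypothesis mupos : pos_fa_measure mu.
Hypothesis l0 : forall E, measurable E -> 0 <= lam E.
Hypothesis ls0 : lam set0 = 0.
Hypothesis lca : count_additive lam.

Let lfa := ca_fa ls0 lca.
Let m0 := mupos.1.
Let mfa := mupos.2.

Let SV E := [set r | exists F, [/\ measurable F, F `<=` E & r = lam F + mu (E `\` F)]].
Let nuf E := inf (SV E).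

Let SV_ne E : measurable E -> SV E (lam set0 + mu E).
Proof. by move=> mE; exists set0; split => //; rewrite setD0. Qed.

Let SV_inf E : measurable E -> has_inf (SV E).
Proof.
move=> mE; split; first by exists (lam set0 + mu E); exact: SV_ne.
exists 0 => r [F [mF FE ->]]; apply: addr_ge0; first exact: l0.
exact/m0/measurableD.
Qed.

Let nu_le E F : measurable E -> measurable F -> F `<=` E ->
  nuf E <= lam F + mu (E `\` F).
Proof.
move=> mE mF FE; have := ge_inf (SV_inf mE).2.
by move=> /(_ (lam F + mu (E `\` F))); apply; exists F.
Qed.

Let nu_ge0 E : measurable E -> 0 <= nuf E.
Proof.
move=> mE; apply: lb_le_inf; first by exists (lam set0 + mu E); exact: SV_ne.
move=> r [F [mF FE ->]]; apply: addr_ge0; first exact: l0.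
exact/m0/measurableD.
Qed.

Let key A B F : measurable A -> measurable B -> A `&` B = set0 ->
  measurable F -> F `<=` A `|` B ->
  lam F + mu ((A `|` B) `\` F) =
  (lam (F `&` A) + mu (A `\` (F `&` A))) + (lam (F `&` B) + mu (B `\` (F `&` B))).
Proof.
move=> mA mB AB mF FAB.
have dis : (F `&` A) `&` (F `&` B) = set0.
  apply/seteqP; split => // x [[_ xa] [_ xb]].
  by have : (A `&` B) x by []; rewrite AB.
have eF : F = (F `&` A) `|` (F `&` B).
  apply/seteqP; split => x.
    by move=> fx; case: (FAB x fx) => h; [left|right].
  by case=> -[].
have eD : (A `|` B) `\` F = (A `\` (F `&` A)) `|` (B `\` (F `&` B)).
  apply/seteqP; split => x.
    by move=> [[xa|xb] nf]; [left|right]; split => // -[].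
  by case=> -[xa h]; (split; [by [left|right]|move=> fx; apply: h]).
have dis2 : (A `\` (F `&` A)) `&` (B `\` (F `&` B)) = set0.
  apply/seteqP; split => // x [[xa _] [xb _]].
  by have : (A `&` B) x by []; rewrite AB.
rewrite {1}eF lfa.2 //; try exact: measurableI.
rewrite eD mfa.2 //; try (apply: measurableD => //; exact: measurableI).
by rewrite addrACA.
Qed.

Let nu_fa : fin_additive nuf.
Proof.
split.
  apply/eqP; rewrite eq_le nu_ge0 // andbT.
  by have := nu_le measurable0 measurable0 (@subset_refl _ set0); rewrite ls0 setD0 mfa.1 addr0.
move=> A B mA mB AB.
have mAB : measurable (A `|` B) by exact: measurableU.
apply/eqP; rewrite eq_le; apply/andP; split; last first.
  apply: lb_le_inf; first by exists (lam set0 + mu (A `|` B)); exact: SV_ne.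
  move=> r [F [mF FAB ->]]; rewrite key //.
  apply: lerD; apply: nu_le => //; try exact: measurableI; exact: subIsetr.
apply/ler_addgt0Pr => e e0.
have e20 : 0 < e / 2 by rewrite divr_gt0.
have [_ [FA [mFA FAA ->]] hA] := inf_adherent e20 (SV_inf mA).
have [_ [FB [mFB FBB ->]] hB] := inf_adherent e20 (SV_inf mB).
have mF : measurable (FA `|` FB) by exact: measurableU.
have FAB : FA `|` FB `<=` A `|` B by move=> x [/FAA|/FBB] h; [left|right].
apply: (le_trans (nu_le mAB mF FAB)); rewrite key //.
have -> : (FA `|` FB) `&` A = FA.
  apply/seteqP; split => x; last by move=> h; split; [left|exact: FAA].
  case=> -[//|xb] xa.
  have : (A `&` B) x by split => //; exact: FBB.
  by rewrite AB.
have -> : (FA `|` FB) `&` B = FB.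
  apply/seteqP; split => x; last by move=> h; split; [right|exact: FBB].
  case=> -[xa|//] xb.
  have : (A `&` B) x by split => //; exact: FAA.
  by rewrite AB.
rewrite [leRHS](_ : _ = (nuf A + e / 2) + (nuf B + e / 2)); last first.
  by rewrite addrACA -splitr.
by apply: lerD; apply: ltW.
Qed.

Lemma split_pure : purely_fin_additive mu ->
  forall E, measurable E -> forall e, 0 < e ->
  exists F, [/\ measurable F, F `<=` E, lam F < e & mu (E `\` F) < e].
Proof.
move=> [_ pu] E mE e e0.
have nuca : count_additive nuf.
  apply: (@dom_ca nuf lam nu_fa) => // A mA; rewrite nu_ge0 //=.
  by have := nu_le mA mA (@subset_refl _ A); rewrite setDv mfa.1 addr0.
have nu0 := pu _ nuca.
have : nuf E = 0.
  apply: nu0 => // A mA; split; first exact: nu_ge0.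
  by have := nu_le mA measurable0 (@sub0set _ A); rewrite ls0 setD0 add0r.
move=> nE.
have [_ [F [mF FE ->]]] := inf_adherent e0 (SV_inf mE).
rewrite -/(nuf E) nE add0r => h.
have hl := l0 mF; have hm : 0 <= mu (E `\` F) by exact/m0/measurableD.
exists F; split => //.
- by apply: le_lt_trans h; rewrite lerDl.
- by apply: le_lt_trans h; rewrite lerDr.
Qed.

End Nu.


Lemma pure_add (mu1 mu2 : set X -> R) : purely_fin_additive mu1 ->
  purely_fin_additive mu2 -> purely_fin_additive (fun E => mu1 E + mu2 E).
Proof.
move=> h1 h2; have [[n1 f1] _] := h1; have [[n2 f2] _] := h2.
split.
  split; first by move=> E mE; apply: addr_ge0; [exact: n1|exact: n2].
  split; first by rewrite f1.1 f2.1 addr0.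
  by move=> A B mA mB AB; rewrite f1.2 // f2.2 // addrACA.
move=> lam ca hl.
have l0 E : measurable E -> 0 <= lam E by move=> /hl[].
have ls0 : lam set0 = 0.
  apply/eqP; rewrite eq_le l0 // andbT.
  by have := (hl _ measurable0).2; rewrite f1.1 f2.1 addr0.
have lfa := ca_fa ls0 ca.
have lpos : pos_fa_measure lam by [].
suff LT : lam setT <= 0.
  move=> E mE; apply/eqP; rewrite eq_le l0 // andbT; apply: le_trans LT.
  exact: pos_mono lpos mE measurableT (@subsetT _ E).
apply/ler_addgt0Pr => e e0; rewrite add0r.
have e4 : 0 < e / 4 by rewrite divr_gt0.
have [F1 [mF1 _ lF1 mF1']] := split_pure h1.1 l0 ls0 ca h1 measurableT e4.
have mE1 : measurable (setT `\` F1) by exact: measurableD.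
have [F2 [mF2 F2E1 lF2 mF2']] := split_pure h2.1 l0 ls0 ca h2 mE1 e4.
have mG : measurable ((setT `\` F1) `\` F2) by exact: measurableD.
have d1 := fa_dec lfa mF1 measurableT (@subsetT _ F1).
have d2 := fa_dec lfa mF2 mE1 F2E1.
have hG := (hl _ mG).2.
have m1G : mu1 ((setT `\` F1) `\` F2) <= mu1 (setT `\` F1).
  by apply: pos_mono h1.1 mG mE1 _ => x [].
have e4' : e = e / 4 + e / 4 + e / 4 + e / 4 by field.
have lG0 := l0 _ mG.
lra.
Qed.

Lemma pure_zero : purely_fin_additive (fun _ : set X => (0 : R)).
Proof.
split; first by split => //; split => // A B _ _ _; rewrite addr0.
move=> lam _ hl E mE; have [h1 h2] := hl E mE.
by apply/eqP; rewrite eq_le h1 h2.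
Qed.

Lemma pure_sum (mu : nat -> set X -> R) n :
  (forall i, (i < n)%N -> purely_fin_additive (mu i)) ->
  purely_fin_additive (fun E => \sum_(k < n) mu k E).
Proof.
elim: n => [|n IH] h.
  have -> : (fun E => \sum_(k < 0) mu k E) = (fun _ => 0).
    by apply/funext => E; rewrite big_ord0.
  exact: pure_zero.
have -> : (fun E => \sum_(k < n.+1) mu k E) =
    (fun E => (\sum_(k < n) mu k E) + mu n E).
  by apply/funext => E; rewrite big_ord_recr.
apply: pure_add; last exact: h.
by apply: IH => i hi; apply: h; rewrite ltnS ltnW.
Qed.

Lemma pure_scale (mu : set X -> R) (c : R) : 0 < c ->
  purely_fin_additive mu -> purely_fin_additive (fun E => c^-1 * mu E).
Proof.
move=> c0 [[n0 [f0 fa]] pu].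
split.
  split; first by move=> E mE; apply: mulr_ge0; [rewrite invr_ge0 ltW|exact: n0].
  split; first by rewrite f0 mulr0.
  by move=> A B mA mB AB; rewrite fa // mulrDr.
move=> lam ca hl E mE.
have ca' : count_additive (fun E => c * lam E).
  move=> F mF tF; have := ca F mF tF.
  have -> : (fun n => \sum_(k < n) c * lam (F k)) = (fun n => c * \sum_(k < n) lam (F k)).
    by apply/funext => n; rewrite mulr_sumr.
  by move=> h; apply: cvgMr.
have h0 : c * lam E = 0.
  apply: (pu _ ca') => // A mA; have [h1 h2] := hl A mA.
  split; first by rewrite mulr_ge0 // ltW.
  by apply: (le_trans (ler_wpM2l (ltW c0) h2)); rewrite mulrA mulfV ?gt_eqF // mul1r.
by move/eqP: h0; rewrite mulf_eq0 gt_eqF //= => /eqP.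
Qed.

End Pure.

Theorem theorem4p3 (d : measure_display) (X : measurableType d) (R : realType)
  (Hinf : ~ finite_set [set: X])
  (Hsing : forall x : X, measurable [set x])
  (p : X -> set X -> R) (Hp : transition_function p)
  (m : nat) (mu : nat -> set X -> R) (Hcyc : measure_cycle p m mu)
  (Hone : exists2 i, (i < m)%N & purely_fin_additive (mu i)) :
  (forall i, (i < m)%N -> purely_fin_additive (mu i)) /\
  purely_fin_additive (mean_measure m mu).
Proof.
have [i im pi] := Hone.
have hall : forall j, (j < m)%N -> purely_fin_additive (mu j).
  by move=> j jm; exact: (cycle_pure Hp Hcyc im jm pi).
split => //.
rewrite /mean_measure; apply: pure_scale; last exact: pure_sum.
by rewrite ltr0n; case: Hcyc.
Qed.
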